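(* Fix $d,m\geq1$ and smooth vector fields $f^0,\dots,f^m$ on $\mathbb{R}^d$. For all exotic forests $\pi_d$, $\hat\pi_{\hat d}$ and all $\phi\in\mathcal{C}^\infty_P(\mathbb{R}^d)$, \[ F^{\mathrm{exo}}(\pi_d)\big[F^{\mathrm{exo}}(\hat\pi_{\hat d})[\phi]\big]=F^{\mathrm{exo}}(\pi_d\diamond\hat\pi_{\hat d})[\phi], \] where $F^{\mathrm{exo}}$ is extended linearly.
   Context: A forest $\pi=(V,E)$: finite node set, directed edges $(v,w)$ ($v$ a predecessor of $w$), each node with at most one outgoing edge, each connected component with exactly one root (node without outgoing edge); $\mathbf{1}$ is the empty forest. A decoration $d:V\to\mathbb{N}$ has $|d^{-1}(n)|\in\{0,2\}$ for $n>0$ in the exotic case (a pair of nodes with the same nonzero decoration is a liana); exotic forests are equivalence classes of such decorated graphs under edge-preserving node bijections that map decorations to decorations differing only by a relabelling of nonzero values (bijection of $\mathbb{N}$ fixing $0$). $F^{\mathrm{exo}}(\pi_d)[\phi](x)=\sum_{i_w\in\{1,\dots,d\},\,w\in V}\sum_{p_n\in\{1,\dots,m\},\,n\in d(V)\setminus\{0\}}\phi_{I_R}(x)\prod_{v\in V}f^{p_{d(v)},i_v}_{I_{\Pi(v)}}(x)$ with $p_0=0$, $R$ the roots, $\Pi(v)$ the predecessors of $v$, $\phi_{I_S}$ the partial derivative of $\phi$ in the indices $i_w,w\in S$, $f^{p,i}_{j_1\dots j_k}$ partial derivatives of the $i$-th component of $f^p$; $F^{\mathrm{exo}}(\mathbf{1})[\phi]=\phi$.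 The Grossman–Larson product $\pi_d\diamond\hat\pi_{\hat d}$ is the sum, over all maps $g$ from the set of roots of $\pi$ to $\hat V\cup\{\ast\}$, of the forest on $V\sqcup\hat V$ with edges $E\cup\hat E\cup\{(r,g(r)):g(r)\neq\ast\}$ and decoration equal to $d$ on $V$ and $\hat d$ on $\hat V$ after relabelling so that nonzero decorations of $\pi$ and $\hat\pi$ are distinct. $\mathcal{C}^\infty_P(\mathbb{R}^d)$: smooth functions with all derivatives polynomially bounded. *)

(* Defs.v *)
From HB Require Import structures.
From mathcomp Require Import all_boot all_order all_algebra.
From mathcomp Require Import all_classical all_reals all_analysis.
Set Implicit Arguments. Unset Strict Implicit. Unset Printing Implicit Defensive.
Import Order.TTheory GRing.Theory Num.Theory.
Import numFieldNormedType.Exports.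
Local Open Scope ring_scope.

Section Exotic.
Variables (R : realType) (d : nat).

Definition evec (j : 'I_d) : 'rV[R]_d := delta_mx 0 j.

Definition dpartial (s : seq 'I_d) (g : 'rV[R]_d -> R) : 'rV[R]_d -> R :=
  foldr (fun j h => fun x => derive h x (evec j)) g s.

Definition smooth (g : 'rV[R]_d -> R) : Prop :=
  forall s : seq 'I_d,
    continuous (dpartial s g) /\
    forall (j : 'I_d) (x : 'rV[R]_d), derivable (dpartial s g) x (evec j).

Definition smoothP (g : 'rV[R]_d -> R) : Prop :=
  smooth g /\
  forall s : seq 'I_d, exists (C : R) (k : nat),
    forall x : 'rV[R]_d, `|dpartial s g x| <= C * (1 + `|x|) ^+ k.

(* A decorated forest on the node set 'I_n is given by a parent map
   (par v = Some w iff (v,w) is an edge; None iff v is a root)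
   and a decoration dec : 'I_n -> nat. *)
Definition is_forest n (par : 'I_n -> option 'I_n) : Prop :=
  forall v : 'I_n, exists k : nat, iter k (fun o => obind par o) (Some v) = None.

Definition exotic_dec n (dec : 'I_n -> nat) : Prop :=
  forall k : nat, (0 < k)%N -> #|[set v | dec v == k]| \in [:: 0%N; 2%N].

Variable m : nat.
(* vector fields f^0, ..., f^m; f p i is the i-th component of f^p *)
Variable f : 'I_m.+1 -> 'I_d -> 'rV[R]_d -> R.

Definition preds n (par : 'I_n -> option 'I_n) (v : 'I_n) : seq 'I_n :=
  [seq w <- enum 'I_n | par w == Some v].
Definition roots n (par : 'I_n -> option 'I_n) : seq 'I_n :=
  [seq w <- enum 'I_n | par w == None].

(* q : 'I_n -> 'I_m gives, for each node, the value p_{d(v)} - 1 in {0..m-1};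
   it must only depend on the decoration (p is a function of the nonzero
   decorations); nodes with decoration 0 use p_0 = 0. *)
Definition liana_compatible n (dec : 'I_n -> nat) (q : {ffun 'I_n -> 'I_m}) : bool :=
  [forall v, forall w, ((dec v != 0%N) && (dec v == dec w)) ==> (q v == q w)].

Definition pval n (dec : 'I_n -> nat) (q : {ffun 'I_n -> 'I_m}) (v : 'I_n)
  : 'I_m.+1 :=
  if dec v == 0%N then ord0 else lift ord0 (q v).

Definition Fexo n (par : 'I_n -> option 'I_n) (dec : 'I_n -> nat)
  (phi : 'rV[R]_d -> R) : 'rV[R]_d -> R :=
  fun x =>
    \sum_(i : {ffun 'I_n -> 'I_d})
      \sum_(q : {ffun 'I_n -> 'I_m} | liana_compatible dec q)
        dpartial [seq i r | r <- roots par] phi x *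
        \prod_(v : 'I_n)
          dpartial [seq i w | w <- preds par v] (f (pval dec q v) (i v)) x.

(* Grossman--Larson product: for g mapping roots of pi to hat-nodes or * (None),
   the forest on 'I_(n + nh) = V \sqcup hatV *)
Definition gl_par n nh (par : 'I_n -> option 'I_n) (parh : 'I_nh -> option 'I_nh)
  (g : {ffun 'I_n -> option 'I_nh}) (k : 'I_(n + nh)) : option 'I_(n + nh) :=
  match fintype.split k with
  | inl v => match par v with
             | Some w => Some (lshift nh w)
             | None => omap (@rshift n nh) (g v)
             end
  | inr w => omap (@rshift n nh) (parh w)
  end.

(* decorations: keep dec on V, shift nonzero decorations of hat pi so that
   they are distinct from those of pi *)
Definition gl_dec n nh (dec : 'I_n -> nat) (dech : 'I_nh -> nat)
  (k : 'I_(n + nh)) : nat :=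
  match fintype.split k with
  | inl v => dec v
  | inr w => if dech w == 0%N then 0%N else addn (dech w) (\big[maxn/0%N]_(v : 'I_n) dec v)
  end.

(* g is only defined on roots: off the roots we take g v = None, i.e. the star *)
Definition root_map n nh (par : 'I_n -> option 'I_n)
  (g : {ffun 'I_n -> option 'I_nh}) : bool :=
  [forall v, (par v != None) ==> (g v == None)].

End Exotic.

(* Main.v *)
Require Import Defs.
From HB Require Import structures.
From mathcomp Require Import all_boot all_order all_algebra.
From mathcomp Require Import all_classical all_reals all_analysis.
Import Order.TTheory GRing.Theory Num.Theory.
Import numFieldNormedType.Exports.
Local Open Scope ring_scope.
Set Implicit Arguments. Unset Strict Implicit. Unset Printing Implicit Defensive.

Section Gen.
Variables (R : realType) (d : nat).
Local Notation V := 'rV[R]_d.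

Definition good (h : V -> R) := forall s j x, derivable (dpartial s h) x (evec R j).

Inductive gen : (V -> R) -> Prop :=
| gen_base h : good h -> gen h
| gen_cst c : gen (fun _ => c)
| gen_add a b : gen a -> gen b -> gen (fun x => a x + b x)
| gen_mul a b : gen a -> gen b -> gen (fun x => a x * b x).

Lemma dpartial_cat s1 s2 (h : V -> R) :
  dpartial (s1 ++ s2) h = dpartial s1 (dpartial s2 h).
Proof. by rewrite /dpartial foldr_cat. Qed.

Lemma dpartial_cons j s (h : V -> R) x :
  dpartial (j :: s) h x = derive (dpartial s h) x (evec R j).
Proof. by []. Qed.

Lemma gen_der h : gen h -> forall j,
  (forall x, derivable h x (evec R j)) /\ gen (fun x => derive h x (evec R j)).
Proof.
elim=> {h}.
- move=> h gh j; split; first by move=> x; exact: (gh [::]).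
  apply: gen_base => s j' x.
  have -> : dpartial s (fun x => derive h x (evec R j)) = dpartial (s ++ [:: j]) h.
    by rewrite dpartial_cat.
  exact: gh.
- move=> c j; split; first by move=> x; exact: derivable_cst.
  have -> : (fun x : V => derive (fun _ : V => c) x (evec R j)) = fun _ => 0.
    by apply: funext => x; exact: derive_cst.
  exact: gen_cst.
- move=> a b _ ha _ hb j; have [da ga] := ha j; have [db gb] := hb j; split.
    by move=> x; exact: (derivableD (da x) (db x)).
  have -> : (fun x => derive (fun y => a y + b y) x (evec R j)) =
      fun x => derive a x (evec R j) + derive b x (evec R j).
    by apply: funext => x; exact: (deriveD (da x) (db x)).
  exact: gen_add.
- move=> a b ga0 ha gb0 hb j; have [da ga] := ha j; have [db gb] := hb j; split.
    by move=> x; exact: (derivableM (da x) (db x)).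
  have -> : (fun x => derive (fun y => a y * b y) x (evec R j)) =
      fun x => a x * derive b x (evec R j) + b x * derive a x (evec R j).
    by apply: funext => x; exact: (deriveM (da x) (db x)).
  by apply: gen_add; apply: gen_mul.
Qed.

Lemma gen_dpartial s h : gen h -> gen (dpartial s h).
Proof.
move=> gh; elim: s => [|j s IH] //=.
exact: (gen_der IH j).2.
Qed.

Lemma gen_derivable s h j x : gen h -> derivable (dpartial s h) x (evec R j).
Proof. by move=> gh; exact: ((gen_der (gen_dpartial s gh) j).1 x). Qed.

Lemma gen_good h : good h -> gen h. Proof. exact: gen_base. Qed.

Lemma gen_sum (I : Type) (r : seq I) (P : pred I) (F : I -> V -> R) :
  (forall i, gen (F i)) -> gen (fun x => \sum_(i <- r | P i) F i x).
Proof.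
move=> gF; elim: r => [|a r IH].
  have -> : (fun x : V => \sum_(i <- [::] | P i) F i x) = fun _ => 0.
    by apply: funext => x; rewrite big_nil.
  exact: gen_cst.
have -> : (fun x => \sum_(i <- a :: r | P i) F i x) =
   fun x => (if P a then F a x else 0) + \sum_(i <- r | P i) F i x.
  by apply: funext => x; rewrite big_cons; case: (P a); rewrite ?add0r.
apply: gen_add => //; case: (P a) => //; exact: gen_cst.
Qed.

Lemma gen_prod (I : Type) (r : seq I) (F : I -> V -> R) :
  (forall i, gen (F i)) -> gen (fun x => \prod_(i <- r) F i x).
Proof.
move=> gF; elim: r => [|a r IH].
  have -> : (fun x : V => \prod_(i <- [::]) F i x) = fun _ => 1.
    by apply: funext => x; rewrite big_nil.
  exact: gen_cst.
have -> : (fun x => \prod_(i <- a :: r) F i x) =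
   fun x => F a x * \prod_(i <- r) F i x.
  by apply: funext => x; rewrite big_cons.
exact: gen_mul.
Qed.

Lemma derive_sumG (I : Type) (r : seq I) (P : pred I) (F : I -> V -> R) j x :
  (forall i, gen (F i)) ->
  derive (fun y => \sum_(i <- r | P i) F i y) x (evec R j) =
  \sum_(i <- r | P i) derive (F i) x (evec R j).
Proof.
move=> gF; elim: r => [|a r IH].
  rewrite big_nil.
  have -> : (fun y : V => \sum_(i <- [::] | P i) F i y) = fun _ => 0.
    by apply: funext => y; rewrite big_nil.
  exact: derive_cst.
rewrite big_cons.
have dr := (gen_der (gen_sum r P gF) j).1 x.
case Pa: (P a).
  have -> : (fun y => \sum_(i <- a :: r | P i) F i y) =
     fun y => F a y + \sum_(i <- r | P i) F i y.
    by apply: funext => y; rewrite big_cons Pa.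
  by rewrite (deriveD ((gen_der (gF a) j).1 x) dr) IH.
have -> : (fun y => \sum_(i <- a :: r | P i) F i y) =
   fun y => \sum_(i <- r | P i) F i y.
  by apply: funext => y; rewrite big_cons Pa.
exact: IH.
Qed.

Lemma derive_prodG (K : eqType) (r : seq K) (F : K -> V -> R) j x :
  uniq r -> (forall k, gen (F k)) ->
  derive (fun y => \prod_(k <- r) F k y) x (evec R j) =
  \sum_(k0 <- r) \prod_(k <- r)
     (if k == k0 then derive (F k) x (evec R j) else F k x).
Proof.
move=> ur gF; elim: r ur => [|a r IH] /=.
  move=> _; rewrite big_nil.
  have -> : (fun y : V => \prod_(k <- [::]) F k y) = fun _ => 1.
    by apply: funext => y; rewrite big_nil.
  exact: derive_cst.
move=> /andP[ar ur].
have -> : (fun y => \prod_(k <- a :: r) F k y) = fun y => F a y * \prod_(k <- r) F k y.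
  by apply: funext => y; rewrite big_cons.
have dP := (gen_der (gen_prod r gF) j).1 x.
rewrite (deriveM ((gen_der (gF a) j).1 x) dP) IH //.
rewrite big_cons big_cons eqxx.
rewrite (@eq_big_seq _ _ _ _ _ (fun k => if k == a then _ else _) (fun k => F k x)); last first.
  by move=> k kr /=; case: (eqVneq k a) => [ka|//]; rewrite -ka kr in ar.
rewrite [X in _ = _ + X](@eq_big_seq _ _ _ _ _ _
   (fun k0 => F a x * \prod_(k <- r) (if k == k0 then derive (F k) x (evec R j) else F k x))); last first.
  move=> k0 k0r /=; rewrite big_cons; case: (eqVneq a k0) => [ak0|//].
  by rewrite ak0 k0r in ar.
rewrite -mulr_sumr /GRing.scale /=.
by rewrite addrC mulrC.
Qed.

Lemma dpartial_sum (I : Type) (r : seq I) (P : pred I) (F : I -> V -> R) s :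
  (forall i, gen (F i)) ->
  dpartial s (fun y => \sum_(i <- r | P i) F i y) =
  fun y => \sum_(i <- r | P i) dpartial s (F i) y.
Proof.
move=> gF; elim: s => [|j s IH] //.
apply: funext => y; rewrite dpartial_cons IH derive_sumG //.
by move=> i; apply: gen_dpartial.
Qed.

Section Leibniz.
Variables (n : nat) (K : finType) (k0 : K) (F : K -> V -> R).
Hypothesis gF : forall k, gen (F k).
Variable (i : 'I_n -> 'I_d).

Definition cond (s : seq 'I_n) (a : {ffun 'I_n -> K}) :=
  [forall v, (v \notin s) ==> (a v == k0)].
Definition upd (a : {ffun 'I_n -> K}) r k : {ffun 'I_n -> K} :=
  [ffun v => if v == r then k else a v].

Lemma leibniz s : uniq s -> forall x,
  dpartial (map i s) (fun y => \prod_(k : K) F k y) x =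
  \sum_(a : {ffun 'I_n -> K} | cond s a)
     \prod_(k : K) dpartial (map i [seq r <- s | a r == k]) (F k) x.
Proof.
elim: s => [|r s IH].
  move=> _ x; rewrite (big_pred1 [ffun => k0]); last first.
    move=> a /=; apply/forallP/eqP.
      by move=> H; apply/ffunP => v; rewrite ffunE; exact/eqP/(implyP (H v)).
    by move=> -> v; rewrite ffunE eqxx implybT.
  by [].
move=> /andP[rs us] x.
rewrite dpartial_cons.
have -> : dpartial (map i s) (fun y => \prod_(k : K) F k y) =
   fun y => \sum_(a : {ffun 'I_n -> K} | cond s a)
     \prod_(k : K) dpartial (map i [seq r <- s | a r == k]) (F k) y.
  by apply: funext => y; exact: IH.
rewrite derive_sumG; last first.
  by move=> a; apply: gen_prod => k; apply: gen_dpartial.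
rewrite (eq_bigr _ (fun a _ => derive_prodG _ _ (index_enum_uniq K)
   (fun k => gen_dpartial _ (gF k)))).
rewrite exchange_big /=.
rewrite (partition_big (fun a : {ffun 'I_n -> K} => a r) xpredT) //.
apply: eq_bigr => k1 _.
rewrite [RHS](reindex_onto (fun a => upd a r k1) (fun a => upd a r k0)); last first.
    move=> a /andP[_ /eqP ar]; apply/ffunP => v; rewrite !ffunE.
  by case: eqP => // ->.
apply: eq_big.
  move=> a; apply/idP/idP.
    move=> /forallP c.
    have ar : a r = k0 by apply/eqP; exact: (implyP (c r) rs).
    apply/andP; split; first (apply/andP; split).
    - apply/forallP => v; apply/implyP; rewrite inE negb_or => /andP[vr vs].
      by rewrite ffunE (negbTE vr); exact: (implyP (c v) vs).
    - by rewrite ffunE eqxx.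
    - apply/eqP/ffunP => v; rewrite !ffunE; case: eqP => // ->.
      by rewrite ar.
  move=> /andP[/andP[c _] /eqP e].
  have ar : a r = k0 by rewrite -e ffunE eqxx.
  apply/forallP => v; apply/implyP => vs.
  case: (eqVneq v r) => [->|vr]; first by rewrite ar.
  have := implyP (forallP c v); rewrite ffunE (negbTE vr); apply.
  by rewrite inE negb_or vr.
move=> a _.
apply: eq_bigr => k _ /=.
rewrite ffunE eqxx.
have -> : [seq r0 <- s | upd a r k1 r0 == k] = [seq r0 <- s | a r0 == k].
  apply: eq_in_filter => v vs; rewrite ffunE; case: (eqVneq v r) => [vr|//].
  by rewrite -vr vs in rs.
by rewrite eq_sym; case: (k1 == k).
Qed.
End Leibniz.

End Gen.

Lemma split_l n nh (v : 'I_n) : fintype.split (lshift nh v) = inl v.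
Proof. exact: (@unsplitK n nh (inl v)). Qed.
Lemma split_r n nh (w : 'I_nh) : fintype.split (@rshift n nh w) = inr w.
Proof. exact: (@unsplitK n nh (inr w)). Qed.

Lemma enum_split n nh :
  enum 'I_(n + nh) = map (lshift nh) (enum 'I_n) ++ map (@rshift n nh) (enum 'I_nh).
Proof.
apply: (inj_map val_inj); rewrite map_cat val_enum_ord iotaD add0n.
rewrite -(map_comp val (lshift nh)) -(map_comp val (@rshift n nh)).
congr (_ ++ _).
  by rewrite (eq_map (_ : val \o lshift nh =1 val)) // val_enum_ord.
rewrite (eq_map (_ : val \o @rshift n nh =1 addn n \o val)) //.
by rewrite map_comp val_enum_ord -iotaDl addn0.
Qed.

Definition fjoin (T : Type) n nh (a : {ffun 'I_n -> T}) (b : {ffun 'I_nh -> T})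
  : {ffun 'I_(n + nh) -> T} :=
  [ffun k => match fintype.split k with inl v => a v | inr w => b w end].

Lemma fjoin_l T n nh a b (v : 'I_n) : @fjoin T n nh a b (lshift nh v) = a v.
Proof. by rewrite ffunE split_l. Qed.
Lemma fjoin_r T n nh a b (w : 'I_nh) : @fjoin T n nh a b (@rshift n nh w) = b w.
Proof. by rewrite ffunE split_r. Qed.

Lemma sum_join (R : nmodType) (T : finType) n nh (P : pred {ffun 'I_(n + nh) -> T})
  (G : {ffun 'I_(n + nh) -> T} -> R) :
  \sum_(I | P I) G I =
  \sum_(a : {ffun 'I_n -> T}) \sum_(b : {ffun 'I_nh -> T} | P (fjoin a b)) G (fjoin a b).
Proof.
rewrite pair_big_dep /=.
rewrite (reindex (fun p : {ffun 'I_n -> T} * {ffun 'I_nh -> T} => fjoin p.1 p.2)) /=.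
  by [].
apply: onW_bij.
exists (fun I : {ffun 'I_(n + nh) -> T} =>
   ([ffun v => I (lshift nh v)], [ffun w => I (@rshift n nh w)])).
  by move=> [a b] /=; congr (_, _); apply/ffunP => v; rewrite ffunE ?fjoin_l ?fjoin_r.
move=> I; apply/ffunP => k; rewrite ffunE.
by case: split_ordP => v -> /=; rewrite ffunE.
Qed.

Lemma big_option (R : Type) (idx : R) (op : Monoid.com_law idx) (T : finType)
   (G : option T -> R) :
  \big[op/idx]_(k : option T) G k = op (G None) (\big[op/idx]_(w : T) G (Some w)).
Proof.
rewrite (perm_big (None :: map Some (index_enum T))); last first.
  apply: uniq_perm; first exact: index_enum_uniq.
    rewrite /= (map_inj_uniq (@Some_inj _)) index_enum_uniq andbT.
    by apply/mapP => -[].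
  by case=> [w|]; rewrite !mem_index_enum //= inE /= map_f ?mem_index_enum.
by rewrite big_cons big_map.
Qed.

Section GL.
Variables (n nh : nat) (par : 'I_n -> option 'I_n) (parh : 'I_nh -> option 'I_nh).
Variable (g : {ffun 'I_n -> option 'I_nh}).
Local Notation gp := (gl_par par parh g).

Lemma gl_par_l v : gp (lshift nh v) =
  match par v with Some w => Some (lshift nh w) | None => omap (@rshift n nh) (g v) end.
Proof. by rewrite /gl_par split_l. Qed.
Lemma gl_par_r w : gp (@rshift n nh w) = omap (@rshift n nh) (parh w).
Proof. by rewrite /gl_par split_r. Qed.

Lemma filter_split (P : pred 'I_(n + nh)) :
  [seq k <- enum 'I_(n + nh) | P k] =
  map (lshift nh) [seq v <- enum 'I_n | P (lshift nh v)] ++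
  map (@rshift n nh) [seq w <- enum 'I_nh | P (@rshift n nh w)].
Proof. by rewrite enum_split filter_cat !filter_map. Qed.

Variable (T : Type) (i : {ffun 'I_n -> T}) (ih : {ffun 'I_nh -> T}).
Local Notation J := (fjoin i ih).

Lemma roots_gl :
  [seq J k | k <- Defs.roots gp] =
  [seq i r | r <- Defs.roots par & g r == None] ++ [seq ih r | r <- Defs.roots parh].
Proof.
rewrite /Defs.roots filter_split map_cat -(map_comp J (lshift nh)) -(map_comp J (@rshift n nh)).
congr (_ ++ _).
  rewrite -[in RHS]filter_predI (eq_map (_ : J \o lshift nh =1 i)); last by move=> v /=; rewrite fjoin_l.
  congr map; apply: eq_filter => v /=; rewrite gl_par_l.
  by case: (par v) => [w|] /=; case: (g v).
rewrite (eq_map (_ : J \o @rshift n nh =1 ih)); last by move=> v /=; rewrite fjoin_r.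
congr map; apply: eq_filter => w /=; rewrite gl_par_r.
by case: (parh w).
Qed.

Lemma preds_gl_l v :
  [seq J k | k <- preds gp (lshift nh v)] = [seq i u | u <- preds par v].
Proof.
rewrite /preds filter_split map_cat -(map_comp J (lshift nh)) -(map_comp J (@rshift n nh)).
have -> : [seq w <- enum 'I_nh | gp (@rshift n nh w) == Some (lshift nh v)] = [::].
  rewrite (@eq_filter _ _ pred0) ?filter_pred0 // => w /=.
  rewrite gl_par_r; case: (parh w) => //= u.
  by apply/eqP => -[] /eqP; rewrite gtn_eqF // ltn_addr.
rewrite /= cats0 (eq_map (_ : J \o lshift nh =1 i)); last by move=> u /=; rewrite fjoin_l.
congr map; apply: eq_filter => u /=; rewrite gl_par_l.
case: (par u) => [w|] /=; first by rewrite !eqE /= eq_lshift.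
case: (g u) => //= w; by apply/eqP => -[] /eqP; rewrite gtn_eqF // ltn_addr.
Qed.

Lemma preds_gl_r w :
  [seq J k | k <- preds gp (@rshift n nh w)] =
  [seq i r | r <- Defs.roots par & g r == Some w] ++ [seq ih u | u <- preds parh w].
Proof.
rewrite /preds /Defs.roots filter_split map_cat -(map_comp J (lshift nh)) -(map_comp J (@rshift n nh)).
congr (_ ++ _).
  rewrite -[in RHS]filter_predI (eq_map (_ : J \o lshift nh =1 i)); last by move=> v /=; rewrite fjoin_l.
  congr map; apply: eq_filter => v.
  transitivity ((g v == Some w) && (par v == None)); last by [].
  rewrite gl_par_l.
  case: (par v) => [u|].
    rewrite (_ : (Some u == None) = false) // andbF.
    by apply/eqP => -[] /eqP; rewrite ltn_eqF // ltn_addr.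
  rewrite (_ : (None == None :> option 'I_n) = true) // andbT.
  case: (g v) => [u'|] //=.
  by apply/eqP/eqP => [[/addnI/val_inj ->]|[->]].
rewrite (eq_map (_ : J \o @rshift n nh =1 ih)); last by move=> v /=; rewrite fjoin_r.
congr map; apply: eq_filter => u /=; rewrite gl_par_r.
case: (parh u) => [u'|] //=.
by rewrite !eqE /= eq_rshift.
Qed.
End GL.

Section DEC.
Variables (n nh m : nat) (dec : 'I_n -> nat) (dech : 'I_nh -> nat).
Local Notation M := (\big[maxn/0%N]_(v : 'I_n) dec v).
Local Notation gd := (gl_dec dec dech).
Definition hsh (a : nat) := if a == 0%N then 0%N else (a + M)%N.

Lemma gl_dec_l v : gd (lshift nh v) = dec v.
Proof. by rewrite /gl_dec split_l. Qed.
Lemma gl_dec_r w : gd (@rshift n nh w) = hsh (dech w).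
Proof. by rewrite /gl_dec split_r. Qed.

Lemma hsh0 a : (hsh a != 0%N) = (a != 0%N).
Proof. rewrite /hsh; case: (a =P 0%N) => [_|/eqP a0] //; by rewrite addn_eq0 (negbTE a0). Qed.

Lemma hsh_eq a b : a != 0%N -> (hsh a == hsh b) = (a == b).
Proof.
move=> a0; rewrite /hsh (negbTE a0); case: (b =P 0%N) => [->|/eqP b0]; last by rewrite eqn_add2r.
by rewrite addn_eq0 (negbTE a0).
Qed.

Lemma hsh_gt a v : a != 0%N -> (dec v < hsh a)%N.
Proof.
move=> a0; rewrite /hsh (negbTE a0).
apply: (leq_ltn_trans (leq_bigmax v)); rewrite -[X in (X < _)%N]add0n ltn_add2r.
by rewrite lt0n.
Qed.

Lemma pval_l (q : {ffun 'I_n -> 'I_m}) qh v :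
  pval gd (fjoin q qh) (lshift nh v) = pval dec q v.
Proof. by rewrite /pval gl_dec_l fjoin_l. Qed.

Lemma pval_r (q : {ffun 'I_n -> 'I_m}) qh w :
  pval gd (fjoin q qh) (@rshift n nh w) = pval dech qh w.
Proof.
rewrite /pval gl_dec_r fjoin_r.
by case: (eqVneq (dech w) 0%N) => [->|d0]; [|rewrite /hsh (negbTE d0) addn_eq0 (negbTE d0)].
Qed.

Lemma compat_join (q : {ffun 'I_n -> 'I_m}) qh :
  liana_compatible gd (fjoin q qh) =
  liana_compatible dec q && liana_compatible dech qh.
Proof.
apply/forallP/andP.
  move=> H; split; apply/forallP => v; apply/forallP => w.
    by have := forallP (H (lshift nh v)) (lshift nh w); rewrite !gl_dec_l !fjoin_l.
  have := forallP (H (@rshift n nh v)) (@rshift n nh w); rewrite !gl_dec_r !fjoin_r.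
  case: (eqVneq (dech v) 0%N) => [->|d0] //.
  by rewrite hsh0 hsh_eq // d0.
move=> [/forallP Hq /forallP Hqh] k; apply/forallP => k'.
case: (split_ordP k) => v ->; case: (split_ordP k') => w ->.
- by rewrite !gl_dec_l !fjoin_l; exact: (forallP (Hq v) w).
- rewrite gl_dec_l gl_dec_r; apply/implyP => /andP[dv /eqP e]; exfalso.
  case: (eqVneq (dech w) 0%N) => [d0|d0].
    by move: e dv; rewrite /hsh d0 /= => ->.
  by have := hsh_gt v d0; rewrite -e ltnn.
- rewrite gl_dec_l gl_dec_r; apply/implyP => /andP[dv /eqP e]; exfalso.
  rewrite hsh0 in dv.
  by have := hsh_gt w dv; rewrite e ltnn.
- rewrite !gl_dec_r !fjoin_r; case: (eqVneq (dech v) 0%N) => [->|d0] //.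
  by rewrite hsh0 hsh_eq //; exact: (forallP (Hqh v) w).
Qed.
End DEC.
Unset Implicit Arguments.


Lemma sum_split_cond (R : nmodType) (I J : finType) (P : pred I) (Q : pred J) (F : I -> J -> R) :
  \sum_(a : I) \sum_(b : J | P a && Q b) F a b = \sum_(a | P a) \sum_(b | Q b) F a b.
Proof.
rewrite [RHS]big_mkcond /=; apply: eq_bigr => a _; case: (P a) => //=.
by rewrite big_pred0.
Qed.

Theorem mainTheorem5 (R : realType) (d m : nat) (hd : (1 <= d)%N) (hm : (1 <= m)%N)
  (f : 'I_m.+1 -> 'I_d -> 'rV[R]_d -> R)
  (hf : forall p i, smooth (f p i))
  (n : nat) (par : 'I_n -> option 'I_n) (dec : 'I_n -> nat)
  (hpar : is_forest par) (hdec : exotic_dec dec)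
  (nh : nat) (parh : 'I_nh -> option 'I_nh) (dech : 'I_nh -> nat)
  (hparh : is_forest parh) (hdech : exotic_dec dech)
  (phi : 'rV[R]_d -> R) (hphi : smoothP phi) (x : 'rV[R]_d) :
  Fexo f par dec (Fexo f parh dech phi) x =
  \sum_(g : {ffun 'I_n -> option 'I_nh} | root_map par g)
    Fexo f (gl_par par parh g) (gl_dec dec dech) phi x.
Proof.
have gphi : gen phi by apply: gen_base => s j y; exact: ((hphi.1 s).2 j y).
have gf : forall p i, gen (f p i) by move=> p i; apply: gen_base => s j y; exact: ((hf p i s).2 j y).
set Psi := Fexo f parh dech phi.
have L1 : forall i : {ffun 'I_n -> 'I_d},
  dpartial [seq i r | r <- Defs.roots par] Psi x =
  \sum_(ih : {ffun 'I_nh -> 'I_d}) \sum_(qh | liana_compatible dech qh)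
   \sum_(g | root_map par g)
   (dpartial ([seq i r | r <- Defs.roots par & g r == None] ++ [seq ih r | r <- Defs.roots parh]) phi x *
    \prod_(w : 'I_nh) dpartial ([seq i r | r <- Defs.roots par & g r == Some w] ++
         [seq ih u | u <- preds parh w]) (f (pval dech qh w) (ih w)) x).
  move=> i; rewrite /Psi /Fexo.
  rewrite dpartial_sum /=; last first.
    move=> ih; apply: gen_sum => qh; apply: gen_mul; first exact: gen_dpartial.
    by apply: gen_prod => w; apply: gen_dpartial.
  apply: eq_bigr => ih _.
  rewrite dpartial_sum /=; last first.
    move=> qh; apply: gen_mul; first exact: gen_dpartial.
    by apply: gen_prod => w; apply: gen_dpartial.
  apply: eq_bigr => qh _.
  pose Fk (k : option 'I_nh) : 'rV[R]_d -> R := match k with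
    | None => dpartial [seq ih r | r <- Defs.roots parh] phi
    | Some w => dpartial [seq ih u | u <- preds parh w] (f (pval dech qh w) (ih w)) end.
  have gFk : forall k, gen (Fk k) by case=> [w|]; apply: gen_dpartial.
  have -> : (fun y => dpartial [seq ih r | r <- Defs.roots parh] phi y *
      \prod_(w : 'I_nh) dpartial [seq ih u | u <- preds parh w] (f (pval dech qh w) (ih w)) y)
     = fun y => \prod_(k : option 'I_nh) Fk k y.
    by apply: funext => y; rewrite big_option.
  rewrite (leibniz None gFk i (filter_uniq _ (enum_uniq _))).
  apply: eq_big.
    move=> g; apply/forallP/forallP => H v; have := H v.
      by rewrite mem_filter mem_enum andbT.
    by rewrite mem_filter mem_enum andbT.
  move=> g _; rewrite big_option /= dpartial_cat; congr (_ * _).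
  by apply: eq_bigr => w _; rewrite dpartial_cat.
have R1 : forall g : {ffun 'I_n -> option 'I_nh},
  Fexo f (gl_par par parh g) (gl_dec dec dech) phi x =
  \sum_(i : {ffun 'I_n -> 'I_d}) \sum_(ih : {ffun 'I_nh -> 'I_d})
  \sum_(q | liana_compatible dec q) \sum_(qh | liana_compatible dech qh)
   (dpartial ([seq i r | r <- Defs.roots par & g r == None] ++ [seq ih r | r <- Defs.roots parh]) phi x *
    (\prod_(v : 'I_n) dpartial [seq i u | u <- preds par v] (f (pval dec q v) (i v)) x *
     \prod_(w : 'I_nh) dpartial ([seq i r | r <- Defs.roots par & g r == Some w] ++
         [seq ih u | u <- preds parh w]) (f (pval dech qh w) (ih w)) x)).
  move=> g; rewrite /Fexo sum_join; apply: eq_bigr => i _; apply: eq_bigr => ih _.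
  rewrite sum_join -sum_split_cond; apply: eq_bigr => q _.
  apply: eq_big => [qh|qh _]; first by rewrite compat_join.
  rewrite roots_gl big_split_ord /=; congr (_ * (_ * _)).
    by apply: eq_bigr => v _; rewrite preds_gl_l pval_l fjoin_l.
  by apply: eq_bigr => w _; rewrite preds_gl_r pval_r fjoin_r.
rewrite (eq_bigr _ (fun g _ => R1 g)) /Fexo.
rewrite [RHS]exchange_big; apply: eq_bigr => i _.
rewrite [RHS]exchange_big.
under [RHS]eq_bigr => ih _ do rewrite exchange_big.
under [RHS]eq_bigr => ih _ do under eq_bigr => q _ do rewrite exchange_big.
rewrite [RHS]exchange_big /=.
apply: eq_bigr => q _.
rewrite L1 mulr_suml; apply: eq_bigr => ih _.
rewrite mulr_suml; apply: eq_bigr => qh _.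
rewrite mulr_suml; apply: eq_bigr => g _.
by rewrite mulrCA mulrC.
Qed.
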